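(* For any $\epsilon>0$ and any $N\in\mathbb{N}$ there exists $\delta>0$ such that: for any C*-algebra $A$ and any $a\in A$ with $\|a\|\le 2$, $\|a\cdot a^*\|<\delta$ and $\|a^*\cdot a\|<\delta$, there exists a quasi-unitary $u\in\widehat{\mathcal{U}}(A)$ with $\|\mu^A_N(u)-\mu^A_N(a)\|<\epsilon$.
   Context: In a C*-algebra $A$, $a\cdot b := a+b-ab$ (an associative operation). A quasi-unitary is $u\in A$ with $u\cdot u^*=u^*\cdot u=0$, and $\widehat{\mathcal{U}}(A)$ is the set of quasi-unitaries. For any $a\in A$, $\mu^A_N(a)$ denotes the $N$-fold product $a\cdot a\cdots a$ ($N$ factors). *)

(* Defs.v *)
From HB Require Import structures.
From mathcomp Require Import all_boot all_order all_algebra.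
From mathcomp Require Import all_classical all_reals all_analysis.
From mathcomp Require Import complex.
Set Implicit Arguments. Unset Strict Implicit. Unset Printing Implicit Defensive.
Import Order.TTheory GRing.Theory Num.Theory.
Import numFieldNormedType.Exports.
Local Open Scope ring_scope.

Record cstar_alg (R : realType) (V : completeNormedModType R[i]) := CstarAlg {
  cmul : V -> V -> V;
  cstar : V -> V;
  cmulA : forall x y z, cmul x (cmul y z) = cmul (cmul x y) z;
  cmulDl : forall x y z, cmul (x + y) z = cmul x z + cmul y z;
  cmulDr : forall x y z, cmul x (y + z) = cmul x y + cmul x z;
  cmulZl : forall (c : R[i]) x y, cmul (c *: x) y = c *: cmul x y;
  cmulZr : forall (c : R[i]) x y, cmul x (c *: y) = c *: cmul x y;
  cnorm_mul : forall x y, `|cmul x y| <= `|x| * `|y|;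
  cstarK : forall x, cstar (cstar x) = x;
  cstarD : forall x y, cstar (x + y) = cstar x + cstar y;
  cstarZ : forall (c : R[i]) x, cstar (c *: x) = (Num.conj c) *: cstar x;
  cstarM : forall x y, cstar (cmul x y) = cmul (cstar y) (cstar x);
  cstar_id : forall x, `|cmul (cstar x) x| = `|x| ^+ 2
}.

Section QuasiOps.
Variables (R : realType) (V : completeNormedModType R[i]) (A : cstar_alg V).

Definition qmul (a b : V) : V := a + b - cmul A a b.

Definition quasi_unitary (u : V) : Prop :=
  qmul u (cstar A u) = 0 /\ qmul (cstar A u) u = 0.

(* mu_N(a) = a . a . ... . a  (N factors); mu_0(a) = 0, the unit of "." *)
Definition mu (N : nat) (a : V) : V := iter N (qmul a) 0.
End QuasiOps.

(* Main.v *)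
Require Import Defs.
From HB Require Import structures.
From mathcomp Require Import all_boot all_order all_algebra.
From mathcomp Require Import all_classical all_reals all_analysis.
From mathcomp Require Import complex.
From mathcomp Require Import ring lra.
Import Order.TTheory GRing.Theory Num.Theory.
Import numFieldNormedType.Exports.
Local Open Scope ring_scope.
Local Open Scope complex_scope.
Set Implicit Arguments. Unset Strict Implicit. Unset Printing Implicit Defensive.
Section ZNorm.
Variable V : zmodType.
Inductive zterm := ZAtom of nat | ZAdd of zterm & zterm | ZOpp of zterm | ZZero.
Fixpoint zeval (env : seq V) (t : zterm) : V :=
  match t with
  | ZAtom j => nth 0 env j
  | ZAdd a b => zeval env a + zeval env b
  | ZOpp a => - zeval env a
  | ZZero => 0
  end.
Fixpoint zcoef (t : zterm) (i : nat) : int :=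
  match t with
  | ZAtom j => ((i == j) : nat)%:Z
  | ZAdd a b => zcoef a i + zcoef b i
  | ZOpp a => - zcoef a i
  | ZZero => 0
  end.
Fixpoint zwf (K : nat) (t : zterm) : bool :=
  match t with
  | ZAtom j => (j < K)%N
  | ZAdd a b => zwf K a && zwf K b
  | ZOpp a => zwf K a
  | ZZero => true
  end.
Lemma zeval_coef env t : zwf (size env) t ->
  zeval env t = \sum_(i < size env) nth 0 env i *~ zcoef t i.
Proof.
elim: t => [j|a iha b ihb|a iha|] /=.
- move=> lt; rewrite (bigD1 (Ordinal lt)) //= eqxx /= big1 ?addr0 //.
  by move=> i /negbTE; rewrite -val_eqE /= => ->; rewrite mulr0z.
- case/andP=> /iha -> /ihb ->; rewrite -big_split /=.
  by apply: eq_bigr => i _; rewrite mulrzDr.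
- move=> /iha ->; rewrite -sumrN; apply: eq_bigr => i _; by rewrite mulrNz.
- by move=> _; rewrite big1 // => i _; rewrite mulr0z.
Qed.
Lemma zsound env t1 t2 : zwf (size env) t1 -> zwf (size env) t2 ->
  all (fun i => zcoef t1 i == zcoef t2 i) (iota 0 (size env)) ->
  zeval env t1 = zeval env t2.
Proof.
move=> w1 w2 /allP H; rewrite !zeval_coef //; apply: eq_bigr => i _.
have Hi : (val i \in iota 0 (size env)) by rewrite mem_iota /= add0n ltn_ord.
by have /eqP -> := H i Hi.
Qed.
End ZNorm.
Ltac zfind x l n :=
  lazymatch l with
  | (x :: _) => constr:(n)
  | (_ :: ?l') => zfind x l' (S n)
  | _ => constr:(tt)
  end.
Ltac zsnoc l x :=
  lazymatch l with
  | (@nil ?T) => constr:(@cons T x (@nil T))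
  | (?y :: ?l') => let r := zsnoc l' x in constr:(y :: r)
  end.
Ltac zlen l :=
  lazymatch l with
  | nil => constr:(O)
  | (_ :: ?l') => let n := zlen l' in constr:(S n)
  end.
Ltac zreify env t :=
  lazymatch t with
  | (@GRing.add _ ?a ?b) =>
      let r1 := zreify env a in
      lazymatch r1 with (?ta, ?env1) =>
        let r2 := zreify env1 b in
        lazymatch r2 with (?tb, ?env2) => constr:((ZAdd ta tb, env2)) end end
  | (@GRing.opp _ ?a) =>
      let r1 := zreify env a in
      lazymatch r1 with (?ta, ?env1) => constr:((ZOpp ta, env1)) end
  | (@GRing.zero _) => constr:((ZZero, env))
  | _ =>
      let i := zfind t env O in
      lazymatch i with
      | tt => let n := zlen env in let env' := zsnoc env t in
              constr:((ZAtom n, env'))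
      | _ => constr:((ZAtom i, env))
      end
  end.
Ltac zmod_eq :=
  lazymatch goal with
  | |- @eq ?T ?l ?r =>
    let r1 := zreify (@nil T) l in
    lazymatch r1 with (?tl, ?env1) =>
      let r2 := zreify env1 r in
      lazymatch r2 with (?tr, ?env2) =>
        exact (@zsound _ env2 tl tr erefl erefl erefl)
      end end
  end.


Lemma normCE (R : realType) (z : R[i]) : 0 <= z -> z = (complex.Re z)%:C.
Proof. case: z => a b; rewrite lecE /= => /andP[/eqP -> _]. by []. Qed.
Lemma half_C (R : realType) : (2^-1 : R[i]) = (2^-1 : R)%:C.
Proof. by rewrite fmorphV /= rmorph_nat. Qed.
Lemma conj_half (R : realType) : Num.conj (2^-1 : R[i]) = 2^-1.
Proof. apply/CrealP. by rewrite rpredV realn. Qed.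

Lemma small_pow (R : realType) (C r : R) : 0 < r -> exists n : nat, C / 2 ^+ n < r.
Proof.
move=> r0; have [C0|C0] := leP C 0.
  by exists 0%N; rewrite expr0 invr1 mulr1; apply: le_lt_trans r0.
have := archi_boundP (ltW (divr_gt0 C0 r0)); set n := Num.Def.archi_bound _ => hn.
exists n; rewrite ltr_pdivrMr ?exprn_gt0 // mulrC -ltr_pdivrMr //.
apply: (lt_trans hn); rewrite -natrX ltr_nat; exact: ltn_expl.
Qed.

Section Norms.
Variables (R : realType) (V : completeNormedModType R[i]).
Definition nv (x : V) : R := complex.Re `|x|.
Lemma normE x : `|x| = (nv x)%:C. Proof. exact: normCE. Qed.
Lemma nv_ge0 x : 0 <= nv x. Proof. by have := normr_ge0 x; rewrite normE ler0c. Qed.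
Lemma nvD x y : nv (x + y) <= nv x + nv y.
Proof. by have := ler_normD x y; rewrite !normE -rmorphD lecR. Qed.
Lemma nvN x : nv (- x) = nv x. Proof. by rewrite /nv normrN. Qed.
Lemma nvB x y : nv (x - y) = nv (y - x). Proof. by rewrite /nv distrC. Qed.
Lemma nv0 : nv 0 = 0. Proof. by rewrite /nv normr0. Qed.
Lemma nv_eq0 x : nv x = 0 -> x = 0.
Proof. by move=> h; apply/normr0_eq0; rewrite normE h. Qed.
Lemma nvZhalf x : nv (2^-1 *: x) = 2^-1 * nv x.
Proof.
rewrite /nv normrZ ger0_norm ?invr_ge0 ?ler0n // half_C normE -rmorphM /=. by [].
Qed.
Lemma nv_lt x d : (`|x| < d%:C) = (nv x < d). Proof. by rewrite normE ltcR. Qed.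

Lemma cauchy_lim (y : nat -> V) (C : R) :
  (forall n k, nv (y n - y (n + k)%N) <= C / 2 ^+ n) ->
  exists l, forall n, nv (l - y n) <= C / 2 ^+ n.
Proof.
move=> H.
have cy : cvgn y.
  apply/cauchy_cvgP; apply: cauchy_exP => e e0.
  have ee := normCE (ltW e0); set r := complex.Re e in ee.
  have r0 : 0 < r by move: e0; rewrite ee ltcR.
  have [n0 hn0] := small_pow C r0.
  exists (y n0); exists n0 => // n /= hn.
  rewrite -ball_normE /= ee -(subnKC hn) nv_lt.
  exact: le_lt_trans (H n0 (n - n0)%N) hn0.
exists (limn y) => n.
apply/ler_addgt0Pr => e e0.
have := (cvgrPdist_le _ _).1 cy e%:C; rewrite ltcR => /(_ _ e0) [N0 _ HN].
have := HN (n + N0)%N (leq_addl _ _); rewrite normE lecR => h1.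
set L := limn y.
have -> : L - y n = (L - y (n + N0)%N) + (y (n + N0)%N - y n).
  by rewrite addrA subrK.
apply: le_trans (nvD _ _) _.
rewrite addrC; apply: lerD => //; rewrite nvB; exact: H.
Qed.
End Norms.

Section Alg.
Variables (R : realType) (V : completeNormedModType R[i]) (A : cstar_alg V).
Local Notation m := (cmul A).
Local Notation s := (cstar A).
Local Notation q := (qmul A).
Local Notation nv := (@nv R V).

Lemma cmul0l x : m 0 x = 0. Proof. by have := cmulZl A 0 0 x; rewrite !scale0r. Qed.
Lemma cmul0r x : m x 0 = 0. Proof. by have := cmulZr A 0 x 0; rewrite !scale0r. Qed.
Lemma cmulNl x y : m (- x) y = - m x y. Proof. by rewrite -scaleN1r cmulZl scaleN1r. Qed.
Lemma cmulNr x y : m x (- y) = - m x y. Proof. by rewrite -scaleN1r cmulZr scaleN1r. Qed.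
Lemma cstar0 : s 0 = 0. Proof. by apply: (@addrI _ (s 0)); rewrite addr0 -cstarD addr0. Qed.
Lemma cstarN x : s (- x) = - s x. Proof. by apply: (@addrI _ (s x)); rewrite -cstarD !subrr cstar0. Qed.
Lemma mDl x y z : m (x + y) z = m x z + m y z. Proof. exact: cmulDl. Qed.
Lemma mDr x y z : m x (y + z) = m x y + m x z. Proof. exact: cmulDr. Qed.
Lemma mA x y z : m x (m y z) = m (m x y) z. Proof. exact: cmulA. Qed.
Lemma sD x y : s (x + y) = s x + s y. Proof. exact: cstarD. Qed.
Lemma sM x y : s (m x y) = m (s y) (s x). Proof. exact: cstarM. Qed.
Lemma sK x : s (s x) = x. Proof. exact: cstarK. Qed.

Ltac cexp := rewrite /qmul ?(mDl, mDr, cmulNl, cmulNr, cmul0l, cmul0r,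
  sD, cstarN, sM, sK, cstar0, mA).

Lemma qmulA x y z : q (q x y) z = q x (q y z). Proof. cexp; zmod_eq. Qed.
Lemma qmul0l x : q 0 x = x. Proof. cexp; zmod_eq. Qed.
Lemma qmul0r x : q x 0 = x. Proof. cexp; zmod_eq. Qed.
Lemma qstar x y : s (q x y) = q (s y) (s x). Proof. cexp; zmod_eq. Qed.

Lemma nvM x y : nv (m x y) <= nv x * nv y.
Proof. by have := cnorm_mul A x y; rewrite !normE -rmorphM lecR. Qed.
Lemma nvM_le x y a b : nv x <= a -> nv y <= b -> nv (m x y) <= a * b.
Proof. move=> ha hb; apply: le_trans (nvM _ _) _; apply: ler_pM => //; exact: nv_ge0. Qed.

Lemma nv_sid x : nv (m (s x) x) = nv x ^+ 2.
Proof.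
have := cstar_id A x; rewrite !normE -rmorphXn => /complexI. by [].
Qed.
Lemma nv_star_ge x : nv x <= nv (s x).
Proof.
have h := nvM (s x) x; rewrite nv_sid in h.
have h0 := nv_ge0 x; have h1 := nv_ge0 (s x).
have [->|xp] := eqVneq (nv x) 0; first by [].
have xp' : 0 < nv x by rewrite lt_def xp.
nra.
Qed.
Lemma nv_star x : nv (s x) = nv x.
Proof. by apply/le_anti; rewrite nv_star_ge -{2}(sK x) nv_star_ge. Qed.

Lemma idem_of_q x : q x x = x -> m x x = x.
Proof.
move=> H; have -> : m x x = x + x - q x x by cexp; zmod_eq.
rewrite H; zmod_eq.
Qed.

(* the map whose fixed point gives the quasi-unitary *)
Definition Sf (h k : V) := m (s k) h + m h k + m (s k) k - m (m (s k) h) k - h.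
Definition Gf (h k : V) := 2^-1 *: Sf h k.

Lemma Sf_sa h k : s h = h -> s (Sf h k) = Sf h k.
Proof. move=> Hh; rewrite /Sf; cexp; rewrite ?Hh; zmod_eq. Qed.

Lemma half_half (x : V) : 2^-1 *: x + 2^-1 *: x = x.
Proof.
by rewrite -scalerDl -[X in _ *: _ = X]scale1r; congr (_ *: _); rewrite [RHS](splitr 1) mul1r.
Qed.

Lemma Gf_fix h k : s h = h -> Gf h k = k -> s k = k /\ q (q (s k) h) k = 0.
Proof.
move=> Hh Hk.
have sk : s k = k by rewrite -Hk /Gf cstarZ conj_half Sf_sa.
split => //.
have -> : q (q (s k) h) k = s k + k - Sf h k by rewrite /Sf; cexp; zmod_eq.
by rewrite sk -{1 2}Hk half_half subrr.
Qed.

Lemma Gf_diff h k1 k2 : Gf h k1 - Gf h k2 = 2^-1 *: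
  (m (s (k1 - k2)) h + m h (k1 - k2) + m (s (k1 - k2)) k1 + m (s k2) (k1 - k2)
   - m (m (s (k1 - k2)) h) k1 - m (m (s k2) h) (k1 - k2)).
Proof. rewrite /Gf -scalerBr; congr (_ *: _); rewrite /Sf; cexp; zmod_eq. Qed.

Lemma e_diff a mm : q (q a mm) (s a) - q a (s a) =
  mm - m a mm - m mm (s a) + m (m a mm) (s a).
Proof. cexp; zmod_eq. Qed.

Lemma mu_diff x y Mx My : q x Mx - q y My =
  (x - y) + (Mx - My) - m (x - y) Mx - m y (Mx - My).
Proof. cexp; zmod_eq. Qed.

Lemma u_diff a l : q a l - a = l - m a l.
Proof. cexp; zmod_eq. Qed.


Lemma nvD5 a b c e f : nv (a + b + c - e - f) <= nv a + nv b + nv c + nv e + nv f.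
Proof.
apply: le_trans (nvD _ _) _; rewrite nvN; apply: lerD => //.
apply: le_trans (nvD _ _) _; rewrite nvN; apply: lerD => //.
apply: le_trans (nvD _ _) _; apply: lerD => //; exact: nvD.
Qed.
Lemma nvD6 a b c e f g :
  nv (a + b + c + e - f - g) <= nv a + nv b + nv c + nv e + nv f + nv g.
Proof.
apply: le_trans (nvD _ _) _; rewrite nvN; apply: lerD => //.
apply: le_trans (nvD _ _) _; rewrite nvN; apply: lerD => //.
apply: le_trans (nvD _ _) _; apply: lerD => //.
apply: le_trans (nvD _ _) _; apply: lerD => //; exact: nvD.
Qed.

Lemma halfpow (C : R) n : C / 2 ^+ n.+1 = 2^-1 * (C / 2 ^+ n).
Proof. by rewrite exprS invfM mulrCA. Qed.

Section Fix.
Variables (d : R) (h : V).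
Hypotheses (d0 : 0 < d) (d1 : d <= 1/100) (hd : nv h <= d) (hs : s h = h).

Lemma Gf_bound k : nv k <= 2 * d -> nv (Gf h k) <= 2 * d.
Proof.
move=> hk; rewrite /Gf nvZhalf /Sf.
have hk' : nv (s k) <= 2 * d by rewrite nv_star.
have b1 := nvM_le hk' hd. have b2 := nvM_le hd hk. have b3 := nvM_le hk' hk.
have b4 := nvM_le (nvM_le hk' hd) hk.
have := nvD5 (m (s k) h) (m h k) (m (s k) k) (m (m (s k) h) k) h.
move=> H. 
have : nv (m (s k) h + m h k + m (s k) k - m (m (s k) h) k - h) <=
   2 * d * d + d * (2 * d) + 2 * d * (2 * d) + 2 * d * d * (2 * d) + d.
  apply: le_trans H _; do 4! (apply: lerD => //).
move=> H2.
apply: le_trans (ler_wpM2l (_ : 0 <= 2^-1) H2) _; first by rewrite invr_ge0 ler0n.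
have dd : d * d <= d / 100 by have e0 := d0; have e1 := d1; nra.
have ddd : d * d * d <= d / 100 by have e0 := d0; have e1 := d1; nra.
have e0 := d0; have e1 := d1; nra.
Qed.

Lemma Gf_lip k1 k2 : nv k1 <= 2 * d -> nv k2 <= 2 * d ->
  nv (Gf h k1 - Gf h k2) <= 2^-1 * nv (k1 - k2).
Proof.
move=> h1 h2; rewrite Gf_diff nvZhalf.
set D := nv (k1 - k2).
have hD : nv (s (k1 - k2)) <= D by rewrite nv_star.
have hD' : nv (k1 - k2) <= D by [].
have h2' : nv (s k2) <= 2 * d by rewrite nv_star.
have H := nvD6 (m (s (k1 - k2)) h) (m h (k1 - k2)) (m (s (k1 - k2)) k1)
   (m (s k2) (k1 - k2)) (m (m (s (k1 - k2)) h) k1) (m (m (s k2) h) (k1 - k2)).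
have : nv (m (s (k1 - k2)) h + m h (k1 - k2) + m (s (k1 - k2)) k1 +
   m (s k2) (k1 - k2) - m (m (s (k1 - k2)) h) k1 - m (m (s k2) h) (k1 - k2)) <=
   D * d + d * D + D * (2 * d) + 2 * d * D + D * d * (2 * d) + 2 * d * d * D.
  have b1 := nvM_le hD hd. have b2 := nvM_le hd hD'. have b3 := nvM_le hD h1.
  have b4 := nvM_le h2' hD'. have b5 := nvM_le (nvM_le hD hd) h1.
  have b6 := nvM_le (nvM_le h2' hd) hD'.
  apply: le_trans H _; do 5! (apply: lerD => //).
move=> H2; have D0 : 0 <= D by apply: nv_ge0.
apply: ler_wpM2l; first by rewrite invr_ge0 ler0n.
apply: le_trans H2 _.
have dd : d * d <= d / 100 by have e0 := d0; have e1 := d1; nra.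
have Dd : D * (d * d) <= D * (d / 100) by apply: ler_wpM2l.
have Dd2 : D * d <= D / 100 by have e0 := d0; have e1 := d1; nra.
have e0 := d0; have e1 := d1; nra.
Qed.

Let y n := iter n (Gf h) 0.

Lemma y_bound n : nv (y n) <= 2 * d.
Proof.
elim: n => [|n IH]; first by rewrite /y /= nv0; have e0 := d0; nra.
exact: Gf_bound.
Qed.

Lemma y_step n : nv (y n.+1 - y n) <= 2 * d / 2 ^+ n.
Proof.
elim: n => [|n IH].
  by rewrite expr0 invr1 mulr1 /y /= subr0; apply: Gf_bound; rewrite nv0; have e0 := d0; nra.
rewrite halfpow; change (nv (Gf h (y n.+1) - Gf h (y n)) <= 2^-1 * (2 * d / 2 ^+ n)).
apply: le_trans (Gf_lip (y_bound _) (y_bound _)) _.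
by apply: ler_wpM2l => //; rewrite invr_ge0 ler0n.
Qed.

Lemma y_cauchy n k : nv (y n - y (n + k)%N) <= 4 * d / 2 ^+ n - 4 * d / 2 ^+ (n + k).
Proof.
elim: k => [|k IH]; first by rewrite addn0 subrr nv0 subrr.
have -> : y n - y (n + k.+1)%N = (y n - y (n + k)%N) + (y (n + k)%N - y (n + k).+1).
  by rewrite addnS addrA subrK.
apply: le_trans (nvD _ _) _.
have := y_step (n + k); rewrite nvB => H.
rewrite addnS halfpow.
have e2 : 2 * d / 2 ^+ (n + k) = 2^-1 * (4 * d / 2 ^+ (n + k)).
  rewrite -!mulrA; move: (d * _) => w; lra.
rewrite e2 in H.
have := lerD IH H; move: (4 * d / 2 ^+ (n + k)) (4 * d / 2 ^+ n) => z z'; lra.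
Qed.

Lemma fix_exists : exists l, nv l <= 2 * d /\ Gf h l = l.
Proof.
have [l Hl] : exists l, forall n, nv (l - y n) <= 4 * d / 2 ^+ n.
  apply: cauchy_lim => n k; apply: le_trans (y_cauchy n k) _.
  rewrite lerBlDr lerDl; apply: divr_ge0; [have e0 := d0; nra | exact: exprn_ge0].
exists l; split.
  apply/ler_addgt0Pr => e e0.
  have [n hn] := small_pow (4 * d) e0.
  have -> : l = (l - y n) + y n by rewrite subrK.
  apply: le_trans (nvD _ _) _; rewrite addrC; apply: lerD; first exact: y_bound.
  exact: le_trans (Hl n) (ltW hn).
have hl2 : nv l <= 2 * d.
  apply/ler_addgt0Pr => e e0.
  have [n hn] := small_pow (4 * d) e0.
  have -> : l = (l - y n) + y n by rewrite subrK.
  apply: le_trans (nvD _ _) _; rewrite addrC; apply: lerD; first exact: y_bound.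
  exact: le_trans (Hl n) (ltW hn).
apply/eqP; rewrite -subr_eq0; apply/eqP/nv_eq0/le_anti; rewrite nv_ge0 andbT.
apply/ler_addgt0Pr => e e0; rewrite add0r.
have [n hn] := small_pow (4 * d) e0.
have -> : Gf h l - l = (Gf h l - Gf h (y n)) + (y n.+1 - l) by rewrite addrA subrK.
apply: le_trans (nvD _ _) _.
apply: le_trans (lerD (Gf_lip hl2 (y_bound n)) (_ : nv (y n.+1 - l) <= 4 * d / 2 ^+ n.+1)) _.
  by rewrite nvB; exact: Hl.
rewrite halfpow; apply: le_trans (ltW hn).
have := Hl n; set z := 4 * d / 2 ^+ n; lra.
Qed.

End Fix.

Lemma nvD3 w x y : nv (w + x - y) <= nv w + nv x + nv y.
Proof.
apply: le_trans (nvD _ _) _; rewrite nvN; apply: lerD => //; exact: nvD.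
Qed.
Lemma nvD4 w x y z : nv (w - x - y + z) <= nv w + nv x + nv y + nv z.
Proof.
apply: le_trans (nvD _ _) _; apply: lerD => //.
apply: le_trans (nvD _ _) _; rewrite nvN; apply: lerD => //.
apply: le_trans (nvD _ _) _; rewrite nvN; exact: lerD.
Qed.
Lemma nvD4b w x y z : nv (w + x - y - z) <= nv w + nv x + nv y + nv z.
Proof.
apply: le_trans (nvD _ _) _; rewrite nvN; apply: lerD => //; exact: nvD3.
Qed.
Lemma nvD2 x y : nv (x - y) <= nv x + nv y.
Proof. by apply: le_trans (nvD _ _) _; rewrite nvN. Qed.

Fixpoint cN (n : nat) : R := if n is n'.+1 then 1 + 4 ^+ n' + 4 * cN n' else 0.
Lemma cN_ge0 n : 0 <= cN n.
Proof.
elim: n => [|n IH] //=; apply: addr_ge0; last by apply: mulr_ge0.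
by apply: addr_ge0 => //; apply: exprn_ge0.
Qed.

Lemma mu_bound n x : nv x <= 3 -> nv (mu A n x) <= 4 ^+ n - 1.
Proof.
move=> hx; elim: n => [|n IH]; first by rewrite /= nv0 expr0 subrr.
change (nv (q x (mu A n x)) <= 4 ^+ n.+1 - 1).
rewrite /qmul; apply: le_trans (nvD3 _ _ _) _.
have := nvM_le hx IH; rewrite exprS.
have := nv_ge0 (mu A n x); have := exprn_ge0 n (ler0n R 4); have := IH.
have := nv_ge0 x; have := hx.
move: (nv (mu A n x)) (4 ^+ n : R) (nv x) => M P X; nra.
Qed.

Lemma mu_lip n x y : nv x <= 3 -> nv y <= 3 ->
  nv (mu A n x - mu A n y) <= cN n * nv (x - y).
Proof.
move=> hx hy; elim: n => [|n IH]; first by rewrite /= subrr nv0 mul0r.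
change (nv (q x (mu A n x) - q y (mu A n y)) <= cN n.+1 * nv (x - y)).
rewrite mu_diff /=.
have := nvD4b (x - y) (mu A n x - mu A n y) (m (x - y) (mu A n x)) (m y (mu A n x - mu A n y)).
have ht : nv (x - y) <= nv (x - y) by [].
have b1 := nvM_le ht (mu_bound n hx).
have b2 := nvM_le hy IH.
have t0 := nv_ge0 (x - y). have c0 := cN_ge0 n.
have P0 := exprn_ge0 n (ler0n R 4).
move: b1 b2 IH t0 c0 P0.
move: (nv (x - y)) (cN n) (4 ^+ n : R) (nv (mu A n x - mu A n y)) => t c P D.
move=> b1 b2 IH t0 c0 P0 H.
nra.
Qed.

End Alg.

Theorem lemma2p4 (R : realType) (eps : R) (N : nat) : 0 < eps ->
  exists delta : R, 0 < delta /\
    forall (V : completeNormedModType R[i]) (A : cstar_alg V) (a : V),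
      `|a| <= 2 ->
      `|qmul A a (cstar A a)| < delta%:C ->
      `|qmul A (cstar A a) a| < delta%:C ->
      exists u : V, quasi_unitary A u /\
        `|mu A N u - mu A N a| < eps%:C.
Proof.
move=> e0.
set c := cN R N; have c0 : 0 <= c by apply: cN_ge0.
set dl := Num.min (1/100 : R) (eps / (12 * (c + 1))).
have dpos : 0 < dl.
  rewrite /dl lt_min; apply/andP; split; first by [].
  by apply: divr_gt0 => //; apply: mulr_gt0 => //; apply: ltr_wpDl.
have dl1 : dl <= 1/100 by rewrite /dl ge_min lexx.
have dl2 : dl <= eps / (12 * (c + 1)) by rewrite /dl ge_min lexx orbT.
exists dl; split => // V A a ha hk hh.
have ha' : nv a <= 2.
  by move: ha; rewrite normE (_ : (2 : R[i]) = (2 : R)%:C) ?lecR // rmorph_nat.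
rewrite nv_lt in hk; rewrite nv_lt in hh.
set h := qmul A (cstar A a) a in hh.
have hs : cstar A h = h by rewrite /h qstar cstarK.
have [l [hl Hl]] := fix_exists A dpos dl1 (ltW hh).
have [sl Z] := Gf_fix hs Hl.
set u := qmul A a l.
have U2 : qmul A (cstar A u) u = 0.
  by rewrite /u qstar qmulA -(qmulA A (cstar A a) a l) -qmulA; exact: Z.
exists u; split; last first.
  rewrite nv_lt.
  have hul : nv (u - a) <= 6 * dl.
    rewrite /u u_diff; apply: le_trans (nvD2 _ _) _.
    have := nvM_le A ha' hl; have := hl; move: (nv l) => L; lra.
  have hu : nv u <= 3.
    have -> : u = a + (u - a) by rewrite addrC subrK.
    apply: le_trans (nvD _ _) _; nra.
  have ha3 : nv a <= 3 by nra.
  apply: le_lt_trans (mu_lip A N hu ha3) _.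
  apply: le_lt_trans (ler_wpM2l (cN_ge0 R N) hul) _.
  have c1 : 0 < 12 * (c + 1) by apply: mulr_gt0 => //; apply: ltr_wpDl.
  move: dl2; rewrite ler_pdivlMr // -/c => dl3.
  have d0 := dpos; nra.
rewrite /quasi_unitary; split => //.
set e := qmul A u (cstar A u).
have He : qmul A e e = e.
  by rewrite /e qmulA -(qmulA A (cstar A u) u (cstar A u)) U2 qmul0l.
have Hee := idem_of_q He.
have Hexp : e = qmul A (qmul A a (qmul A l (cstar A l))) (cstar A a).
  by rewrite /e /u qstar !qmulA.
set mm := qmul A l (cstar A l) in Hexp.
have nmm : nv mm <= 4 * dl + 4 * dl * dl.
  rewrite /mm /qmul; apply: le_trans (nvD3 _ _ _) _.
  have hl' : nv (cstar A l) <= 2 * dl by rewrite nv_star.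
  have := nvM_le A hl hl'; move: hl hl'; rewrite nv_star; move: (nv l) => L; lra.
have hsa : nv (cstar A a) <= 2 by rewrite nv_star.
have ne : nv e < 1.
  have -> : e = qmul A a (cstar A a) + (e - qmul A a (cstar A a)) by rewrite addrC subrK.
  apply: le_lt_trans (nvD _ _) _.
  rewrite Hexp e_diff.
  have hM : nv mm <= nv mm by [].
  have b1 := nvM_le A ha' hM. have b2 := nvM_le A hM hsa.
  have b3 := nvM_le A (nvM_le A ha' hM) hsa.
  have := nvD4 mm (cmul A a mm) (cmul A mm (cstar A a)) (cmul A (cmul A a mm) (cstar A a)).
  move: b1 b2 b3 nmm hk (nv_ge0 mm).
  move: (nv mm) => M b1 b2 b3 nmm' hk' M0 H.
  have d0 := dpos; nra.
have ne0 : nv e = 0.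
  have := nvM A e e; rewrite Hee => H.
  have := nv_ge0 e; move: H ne; move: (nv e) => E; nra.
exact: nv_eq0.
Qed.
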